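(* Let $N\ge1$ and $0<k\le N$, and let $\mathfrak D(N,k)$ be the set of skew-Hermitian $N\times N$ complex matrices $A$ such that $A_{ij}=0$ unless $k$ divides $i-j$. Then $\mathfrak D(N,k)$ is a real Lie subalgebra of $\mathfrak u(N)$ and, with $d=\lfloor N/k\rfloor$ and $r=N-kd$, \[\mathfrak D(N,k)\cong\mathfrak u(d)^{k-r}\oplus\mathfrak u(d+1)^{r}\cong\mathfrak{su}(d)^{k-r}\oplus\mathfrak{su}(d+1)^{r}\oplus\mathfrak u(1)^k\] as Lie algebras. In particular $\dim\mathfrak D(N,k)=kd^2+2rd+r=d(N+r)+r$.
   Context: $\mathfrak u(n)$ denotes the Lie algebra of skew-Hermitian $n\times n$ complex matrices and $\mathfrak{su}(n)$ its traceless subalgebra, with the matrix commutator as bracket; $\lfloor\cdot\rfloor$ is the integer part. *)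

(* Defs.v *)
(* Complex numbers: an arbitrary numClosedFieldType C
   (e.g. complex R for R : rcfType / realType); real scalars = Num.real. *)
From HB Require Import structures.
From mathcomp Require Import all_boot all_order all_algebra.
Set Implicit Arguments. Unset Strict Implicit. Unset Printing Implicit Defensive.
Import Order.TTheory GRing.Theory Num.Theory.
Local Open Scope ring_scope.

Section Defs.
Variable C : numClosedFieldType.

Definition adjmx m n (A : 'M[C]_(m, n)) : 'M[C]_(n, m) := map_mx (fun x => x^*) A^T.

Definition mxcomm n (A B : 'M[C]_n) : 'M[C]_n := A *m B - B *m A.

Definition skew_herm n (A : 'M[C]_n) : bool := adjmx A == - A.
Definition skew_herm0 n (A : 'M[C]_n) : bool := skew_herm A && (\tr A == 0).

Definition Dset N k (A : 'M[C]_N) : bool :=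
  skew_herm A &&
  [forall i : 'I_N, forall j : 'I_N, (i %% k != j %% k)%N ==> (A i j == 0)].

Definition real_lie_subalg_u n (P : pred 'M[C]_n) : Prop :=
  {subset P <= @skew_herm n} /\
  0 \in P /\
  (forall A B, A \in P -> B \in P -> A + B \in P) /\
  (forall (a : C) A, a \is Num.real -> A \in P -> a *: A \in P) /\
  (forall A B, A \in P -> B \in P -> mxcomm A B \in P).

(* isomorphism of real Lie algebras, each given as a subset of an
   lmodType C (closed under real combinations and bracket) *)
Definition real_lie_iso (V W : lmodType C) (bV : V -> V -> V) (bW : W -> W -> W)
  (P : pred V) (Q : pred W) (f : V -> W) : Prop :=
  (forall x, x \in P -> f x \in Q) /\
  {in P &, injective f} /\
  (forall y, y \in Q -> exists2 x, x \in P & f x = y) /\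
  (forall (a b : C) x y, a \is Num.real -> b \is Num.real -> x \in P -> y \in P ->
     f (a *: x + b *: y) = a *: f x + b *: f y) /\
  (forall x y, x \in P -> y \in P -> f (bV x y) = bW (f x) (f y)).

Definition real_lie_isomorphic (V W : lmodType C) (bV : V -> V -> V)
  (bW : W -> W -> W) (P : pred V) (Q : pred W) : Prop :=
  exists f : V -> W, real_lie_iso bV bW P Q f.

(* direct sums u(d)^a (+) u(e)^b, resp. su(d)^a (+) su(e)^b (+) u(1)^c *)
Definition UU a b d e := ({ffun 'I_a -> 'M[C]_d} * {ffun 'I_b -> 'M[C]_e})%type.
Definition UU_br a b d e (x y : UU a b d e) : UU a b d e :=
  ([ffun i => mxcomm (x.1 i) (y.1 i)], [ffun i => mxcomm (x.2 i) (y.2 i)]).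
Definition UU_pred a b d e : pred (UU a b d e) :=
  fun x => [forall i, skew_herm (x.1 i)] && [forall i, skew_herm (x.2 i)].

Definition SU a b c d e :=
  ({ffun 'I_a -> 'M[C]_d} * {ffun 'I_b -> 'M[C]_e} * {ffun 'I_c -> 'M[C]_1})%type.
Definition SU_br a b c d e (x y : SU a b c d e) : SU a b c d e :=
  ([ffun i => mxcomm (x.1.1 i) (y.1.1 i)], [ffun i => mxcomm (x.1.2 i) (y.1.2 i)],
   [ffun i => mxcomm (x.2 i) (y.2 i)]).
Definition SU_pred a b c d e : pred (SU a b c d e) :=
  fun x => [&& [forall i, skew_herm0 (x.1.1 i)], [forall i, skew_herm0 (x.1.2 i)]
            & [forall i, skew_herm (x.2 i)]].

Definition real_dim n (P : pred 'M[C]_n) (m : nat) : Prop :=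
  exists b : 'I_m -> 'M[C]_n,
    (forall i, b i \in P) /\
    (forall c : 'I_m -> C, (forall i, c i \is Num.real) ->
        \sum_i c i *: b i = 0 -> forall i, c i = 0) /\
    (forall A, A \in P -> exists2 c : 'I_m -> C, (forall i, c i \is Num.real) &
        A = \sum_i c i *: b i).

End Defs.

(* Main.v *)
Set Warnings "-notation-overridden,-ambiguous-paths,-notation-incompatible-prefix".
Require Import Defs.
From HB Require Import structures.
From mathcomp Require Import all_boot all_order all_algebra.
From mathcomp Require Import zify ring lra.
Set Implicit Arguments. Unset Strict Implicit. Unset Printing Implicit Defensive.
Import Order.TTheory GRing.Theory Num.Theory.
Local Open Scope ring_scope.

Section Aux.
Variable C : numClosedFieldType.

Lemma ffun_test (I : finType) (n : nat) (a : C) (f g : {ffun I -> 'M[C]_n}) i :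
  (a *: f + g) i = a *: f i + g i.
Proof. by rewrite !ffunE. Qed.

Lemma mx_test n (a : C) (A B : 'M[C]_n) i j :
  (a *: A + B - A *m B) i j = a * A i j + B i j - \sum_l A i l * B l j.
Proof. by rewrite !mxE. Qed.

Lemma adjmxE m n (A : 'M[C]_(m,n)) i j : adjmx A i j = (A j i)^*.
Proof. by rewrite !mxE. Qed.

Lemma skew_hermP n (A : 'M[C]_n) :
  reflect (forall i j, (A j i)^* = - A i j) (skew_herm A).
Proof.
apply: (iffP eqP) => [H i j|H]; first by rewrite -adjmxE H mxE.
by apply/matrixP => i j; rewrite adjmxE H mxE.
Qed.

Lemma arithA (k d r c u : nat) : (c < r)%N -> (r <= k)%N ->
  (c + k * u < k * d + r)%N = (u < d.+1)%N.
Proof.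
move=> h h'; apply/idP/idP => H.
  rewrite ltnNge; apply/negP => H2; nia.
nia.
Qed.

Lemma arithB (k d r c u : nat) : (r <= c)%N -> (c < k)%N ->
  (c + k * u < k * d + r)%N = (u < d)%N.
Proof.
move=> h1 h2; apply/idP/idP => H.
  rewrite ltnNge; apply/negP => H2; nia.
nia.
Qed.


Definition get2 m n (M : 'M[C]_(m,n)) (s t : nat) : C :=
  match @insub _ _ 'I_m s, @insub _ _ 'I_n t with
  | Some s', Some t' => M s' t'
  | _, _ => 0
  end.

Lemma get2E m n (M : 'M[C]_(m,n)) (i : 'I_m) (j : 'I_n) : get2 M i j = M i j.
Proof. by rewrite /get2 !valK. Qed.

Lemma get2_lt m n (M : 'M[C]_(m,n)) s t (hs : (s < m)%N) (ht : (t < n)%N) :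
  get2 M s t = M (Ordinal hs) (Ordinal ht).
Proof.
by rewrite /get2 (@insubT _ (fun x => (x < m)%N) 'I_m s hs)
  (@insubT _ (fun x => (x < n)%N) 'I_n t ht).
Qed.

Lemma get2_outl m n (M : 'M[C]_(m,n)) s t : ~~ (s < m)%N -> get2 M s t = 0.
Proof. by move=> h; rewrite /get2 (@insubN _ (fun x => (x < m)%N) 'I_m s h). Qed.

Lemma get2_outr m n (M : 'M[C]_(m,n)) s t : ~~ (t < n)%N -> get2 M s t = 0.
Proof.
by move=> h; rewrite /get2 (@insubN _ (fun x => (x < n)%N) 'I_n t h); case: insub.
Qed.

Lemma get2_skew n (M : 'M[C]_n) s t : skew_herm M -> (get2 M t s)^* = - get2 M s t.
Proof.
move/skew_hermP => H; rewrite /get2.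
case: (@insub _ _ 'I_n s) => [s'|]; case: (@insub _ _ 'I_n t) => [t'|] //=;
  rewrite ?H ?conjC0 ?oppr0 //.
Qed.

Lemma get2_lin m n (a b : C) (A B : 'M[C]_(m,n)) s t :
  get2 (a *: A + b *: B) s t = a * get2 A s t + b * get2 B s t.
Proof.
rewrite /get2; case: (@insub _ _ 'I_m s) => [s'|]; case: (@insub _ _ 'I_n t) => [t'|] //=;
  rewrite ?mxE ?mulr0 ?addr0 //.
Qed.

Lemma sum_ord_eq (R : nmodType) n m (F : nat -> R) : (m < n)%N ->
  \sum_(l < n) (if val l == m then F l else 0) = F m.
Proof.
move=> hm; rewrite (bigD1 (Ordinal hm)) //= eqxx big1 ?addr0 // => l hl.
case: eqP => // E; case/negP: hl; apply/eqP/val_inj => /=; exact: E.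
Qed.

Lemma sum_class (R : nmodType) n k c sz (G : nat -> R) : (0 < k)%N -> (c < k)%N ->
  (forall u, (c + k * u < n)%N = (u < sz)%N) ->
  (forall l, (l < n)%N -> (l %% k != c)%N -> G l = 0) ->
  \sum_(l < n) G l = \sum_(u < sz) G (c + k * u)%N.
Proof.
move=> hk hc Hsz H0.
transitivity (\sum_(l < n) \sum_(u < sz) (if val l == (c + k * u)%N then G l else 0)).
  apply: eq_bigr => l _; case: (eqVneq (l %% k)%N c) => hl.
    have El : (l = c + k * (l %/ k) :> nat)%N.
      by rewrite [in LHS](divn_eq l k) hl mulnC addnC.
    rewrite (eq_bigr (fun u : 'I_sz => if val u == (l %/ k)%N then G l else 0)).
      by rewrite (sum_ord_eq (fun _ => G l)) // -Hsz -El.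
    move=> u _; congr (if _ then _ else _).
    rewrite -[\val l]/(l : nat) -[\val u]/(u : nat) {1}El eqn_add2l eqn_pmul2l // eq_sym //.
  rewrite H0 // big1 // => u _; rewrite ifN //.
  apply: contra hl => /eqP ->.
  rewrite addnC mulnC modnMDl modn_small //.
rewrite exchange_big; apply: eq_bigr => u _.
by rewrite (sum_ord_eq (fun l => G l)) // Hsz.
Qed.

Lemma sum_class_nat_test n k c sz : (0 < k)%N -> (c < k)%N ->
  (forall u, (c + k * u < n)%N = (u < sz)%N) ->
  (\sum_(l < n) ((l %% k == c)%N : nat))%N = sz.
Proof.
move=> hk hc Hsz.
rewrite (@sum_class nat n k c sz (fun l => ((l %% k == c)%N : nat))) //.
  rewrite (eq_bigr (fun _ => 1%N)) ?sum1_card ?card_ord // => u _.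
  by rewrite addnC mulnC modnMDl modn_small ?eqxx.
by move=> l _ /negbTE ->.
Qed.


Lemma DsetP N k (A : 'M[C]_N) : reflect
  (skew_herm A /\ forall i j : 'I_N, (i %% k != j %% k)%N -> A i j = 0) (Dset k A).
Proof.
apply: (iffP andP) => [[h1 /forallP h2]|[h1 h2]]; split => //.
  by move=> i j hij; move: (h2 i) => /forallP/(_ j)/implyP/(_ hij)/eqP.
by apply/forallP => i; apply/forallP => j; apply/implyP => hij; rewrite h2.
Qed.

Lemma mxcommE n (A B : 'M[C]_n) i j :
  mxcomm A B i j = \sum_l A i l * B l j - \sum_l B i l * A l j.
Proof. by rewrite /mxcomm !mxE. Qed.

Lemma skew_comm n (A B : 'M[C]_n) : skew_herm A -> skew_herm B -> skew_herm (mxcomm A B).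
Proof.
move=> /skew_hermP hA /skew_hermP hB; apply/skew_hermP => i j.
rewrite !mxcommE rmorphB !rmorph_sum /= opprB; congr (_ - _); apply: eq_bigr => l _;
  by rewrite rmorphM /= hA hB mulrNN mulrC.
Qed.

Lemma subalgP N k : real_lie_subalg_u [pred A : 'M[C]_N | Dset k A].
Proof.
split; first by move=> A /DsetP [].
split; first by apply/DsetP; split => [|i j _]; [apply/skew_hermP => i j; rewrite !mxE conjC0 oppr0|rewrite mxE].
split.
  move=> A B /DsetP [/skew_hermP hA zA] /DsetP [/skew_hermP hB zB]; apply/DsetP; split.
    by apply/skew_hermP => i j; rewrite !mxE rmorphD /= hA hB opprD.
  by move=> i j hij; rewrite !mxE zA ?zB ?addr0.
split.
  move=> a A ha /DsetP [/skew_hermP hA zA]; apply/DsetP; split.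
    by apply/skew_hermP => i j; rewrite !mxE rmorphM /= hA conj_Creal // mulrN.
  by move=> i j hij; rewrite !mxE zA ?mulr0.
move=> A B /DsetP [hA zA] /DsetP [hB zB]; apply/DsetP; split; first exact: skew_comm.
move=> i j hij; rewrite mxcommE !big1 ?subrr // => l _.
  case: (eqVneq (i %% k)%N (l %% k)%N) => hil; last by rewrite (zB i l) ?mul0r.
  by rewrite (zA l j) ?mulr0 // -hil.
case: (eqVneq (i %% k)%N (l %% k)%N) => hil; last by rewrite (zA i l) ?mul0r.
by rewrite (zB l j) ?mulr0 // -hil.
Qed.


Lemma modC k c s : (c < k)%N -> ((c + k * s) %% k = c)%N.
Proof. by move=> h; rewrite addnC mulnC modnMDl modn_small. Qed.

Lemma divC k c s : (c < k)%N -> ((c + k * s) %/ k = s)%N.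
Proof.
move=> h; have hk : (0 < k)%N by apply: leq_ltn_trans h.
by rewrite addnC mulnC divnMDl // divn_small ?addn0.
Qed.

Lemma divn_eq' m k : (m = m %% k + k * (m %/ k))%N.
Proof. by rewrite addnC mulnC -divn_eq. Qed.

Definition getF (a n : nat) (F : {ffun 'I_a -> 'M[C]_n}) (c s t : nat) : C :=
  match @insub _ _ 'I_a c with Some c' => get2 (F c') s t | None => 0 end.

Lemma getF_lt a n (F : {ffun 'I_a -> 'M[C]_n}) c s t (hc : (c < a)%N) :
  getF F c s t = get2 (F (Ordinal hc)) s t.
Proof. by rewrite /getF (@insubT _ (fun x => (x < a)%N) 'I_a c hc). Qed.

Lemma getF_skew a n (F : {ffun 'I_a -> 'M[C]_n}) c s t :
  (forall i, skew_herm (F i)) -> (getF F c t s)^* = - getF F c s t.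
Proof.
move=> H; rewrite /getF; case: (@insub _ _ 'I_a c) => [c'|]; last by rewrite conjC0 oppr0.
exact: get2_skew.
Qed.

Section Iso1.
Variables (N k d r : nat).
Hypothesis hk : (0 < k)%N.
Hypothesis hrk : (r < k)%N.
Hypothesis hN : N = (k * d + r)%N.

Local Notation UUt := (({ffun 'I_(k - r) -> 'M[C]_d} * {ffun 'I_r -> 'M[C]_d.+1})%type).

Definition fwd (A : 'M[C]_N) : UUt :=
  ([ffun i : 'I_(k - r) => \matrix_(s < d, t < d) get2 A (r + i + k * s)%N (r + i + k * t)%N],
   [ffun i : 'I_r => \matrix_(s < d.+1, t < d.+1) get2 A (i + k * s)%N (i + k * t)%N]).

Definition bwd (x : UUt) : 'M[C]_N :=
  \matrix_(p, q) if (p %% k == q %% k)%N then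
     (if (p %% k < r)%N then getF x.2 (p %% k) (p %/ k) (q %/ k)
      else getF x.1 (p %% k - r) (p %/ k) (q %/ k)) else 0.

Lemma szA c u : (c < r)%N -> (c + k * u < N)%N = (u < d.+1)%N.
Proof. by move=> h; rewrite hN arithA // ltnW. Qed.

Lemma szB c u : (r <= c)%N -> (c < k)%N -> (c + k * u < N)%N = (u < d)%N.
Proof. by move=> h h'; rewrite hN arithB. Qed.

Lemma prod_class (A B : 'M[C]_N) (p q : 'I_N) c sz :
  (forall i j : 'I_N, (i %% k != j %% k)%N -> A i j = 0) ->
  (p %% k = c)%N -> (c < k)%N -> (forall u, (c + k * u < N)%N = (u < sz)%N) ->
  \sum_l A p l * B l q = \sum_(u < sz) get2 A p (c + k * u)%N * get2 B (c + k * u)%N q.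
Proof.
move=> zA hp hc Hsz.
transitivity (\sum_(l < N) (fun l : nat => get2 A p l * get2 B l q) l).
  by apply: eq_bigr => l _; rewrite !get2E.
rewrite (@sum_class _ N k c sz (fun l : nat => get2 A p l * get2 B l q)) // => l hl hlc.
by rewrite (get2_lt _ (ltn_ord p) hl) zA ?mul0r // hp eq_sym.
Qed.


Lemma bwd_fwd A : Dset k A -> bwd (fwd A) = A.
Proof.
move=> /DsetP [_ zA]; apply/matrixP => p q; rewrite mxE.
case: (eqVneq (p %% k)%N (q %% k)%N) => hpq; last by rewrite zA.
have hc : (p %% k < k)%N by rewrite ltn_mod.
have Ep := divn_eq' p k; have Eq := divn_eq' q k.
case: ifP => hr.
  have hp' : (p %/ k < d.+1)%N by rewrite -(szA _ hr) -Ep.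
  have hq' : (q %/ k < d.+1)%N by rewrite -(szA _ hr) hpq -Eq.
  rewrite (getF_lt _ _ _ hr) (get2_lt _ hp' hq') ffunE mxE /=.
  by rewrite -Ep hpq -Eq get2E.
have hr' : (r <= p %% k)%N by rewrite leqNgt hr.
have hc' : (p %% k - r < k - r)%N by rewrite ltn_sub2r.
have hp' : (p %/ k < d)%N by rewrite -(szB _ hr' hc) -Ep.
have hq' : (q %/ k < d)%N by rewrite -(szB _ hr' hc) hpq -Eq.
rewrite (getF_lt _ _ _ hc') (get2_lt _ hp' hq') ffunE mxE /=.
by rewrite subnKC // -Ep hpq -Eq get2E.
Qed.

Lemma fwd_bwd (x : UUt) : fwd (bwd x) = x.
Proof.
case: x => x1 x2; rewrite /fwd; congr pair; apply/ffunP => i; apply/matrixP => s t;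
  rewrite !ffunE mxE /=.
  have hi : (r + i < k)%N by rewrite -ltn_subRL.
  have hri : (r <= r + i)%N by rewrite leq_addr.
  have hs : (r + i + k * s < N)%N by rewrite szB.
  have ht : (r + i + k * t < N)%N by rewrite szB.
  rewrite (get2_lt _ hs ht) mxE /= !modC // eqxx ltnNge hri /= !divC // addKn.
  rewrite (getF_lt _ _ _ (ltn_ord i)) -[in RHS](get2E (x1 i)); congr (get2 (x1 _) _ _).
  exact: val_inj.
have hi : (i < k)%N by apply: ltn_trans hrk.
have hs : (i + k * s < N)%N by rewrite szA.
have ht : (i + k * t < N)%N by rewrite szA.
rewrite (get2_lt _ hs ht) mxE /= !modC // eqxx ltn_ord !divC //.
rewrite (getF_lt _ _ _ (ltn_ord i)) -[in RHS](get2E (x2 i)); congr (get2 (x2 _) _ _).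
exact: val_inj.
Qed.


Lemma bwd_P (x : UUt) : UU_pred x -> Dset k (bwd x).
Proof.
case/andP => /forallP h1 /forallP h2; apply/DsetP; split; last first.
  by move=> i j hij; rewrite mxE ifN.
apply/skew_hermP => p q; rewrite !mxE eq_sym.
case: (eqVneq (p %% k)%N (q %% k)%N) => hpq; last by rewrite conjC0 oppr0.
rewrite hpq; case: ifP => _; exact: getF_skew.
Qed.

Lemma fwd_P A : Dset k A -> UU_pred (fwd A).
Proof.
case/DsetP => hA _; apply/andP; split; apply/forallP => i; rewrite ffunE;
  apply/skew_hermP => s t; rewrite !mxE; exact: get2_skew.
Qed.

Lemma fwd_lin (a b : C) A B : fwd (a *: A + b *: B) = a *: fwd A + b *: fwd B.
Proof.
rewrite /fwd; congr pair; apply/ffunP => i; apply/matrixP => s t;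
  by rewrite !ffunE !mxE get2_lin.
Qed.

Lemma fwd_br A B : Dset k A -> Dset k B ->
  fwd (mxcomm A B) = UU_br (fwd A) (fwd B).
Proof.
move=> /DsetP [_ zA] /DsetP [_ zB].
rewrite /fwd /UU_br; congr pair; apply/ffunP => i; apply/matrixP => s t;
  rewrite !ffunE mxE /=.
  have hi : (r + i < k)%N by rewrite -ltn_subRL.
  have hri : (r <= r + i)%N by rewrite leq_addr.
  have hs : (r + i + k * s < N)%N by rewrite szB.
  have ht : (r + i + k * t < N)%N by rewrite szB.
  have Hsz u : (r + i + k * u < N)%N = (u < d)%N by rewrite szB.
  rewrite (get2_lt _ hs ht) !mxcommE.
  rewrite (prod_class (A := A) B (p := Ordinal hs) (Ordinal ht) zA (modC _ hi) hi Hsz).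
  rewrite (prod_class (A := B) A (p := Ordinal hs) (Ordinal ht) zB (modC _ hi) hi Hsz).
  by congr (_ - _); apply: eq_bigr => u _; rewrite !mxE.
have hi : (i < k)%N by apply: ltn_trans hrk.
have hs : (i + k * s < N)%N by rewrite szA.
have ht : (i + k * t < N)%N by rewrite szA.
have Hsz u : (i + k * u < N)%N = (u < d.+1)%N by rewrite szA.
rewrite (get2_lt _ hs ht) !mxcommE.
rewrite (prod_class (A := A) B (p := Ordinal hs) (Ordinal ht) zA (modC _ hi) hi Hsz).
rewrite (prod_class (A := B) A (p := Ordinal hs) (Ordinal ht) zB (modC _ hi) hi Hsz).
by congr (_ - _); apply: eq_bigr => u _; rewrite !mxE.
Qed.

Lemma iso1 : real_lie_iso (@mxcomm C N) (@UU_br C (k - r) r d d.+1)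
  [pred A : 'M[C]_N | Dset k A] (@UU_pred C (k - r) r d d.+1) fwd.
Proof.
split; first by move=> A; rewrite inE => /fwd_P.
split.
  by move=> A B; rewrite !inE => hA hB E; rewrite -(bwd_fwd hA) -(bwd_fwd hB) E.
split.
  by move=> y hy; exists (bwd y); [rewrite inE; exact: bwd_P | exact: fwd_bwd].
split; first by move=> a b A B _ _ _ _; exact: fwd_lin.
by move=> A B; rewrite !inE; exact: fwd_br.
Qed.

End Iso1.


Definition tr1 n (X : 'M[C]_n) : C := \tr X / n%:R.

Lemma trace_skew n (X : 'M[C]_n) : skew_herm X -> (\tr X)^* = - \tr X.
Proof.
move/skew_hermP => h; rewrite /mxtrace rmorph_sum -sumrN; apply: eq_bigr => i _; exact: h.
Qed.

Lemma tr1_skew n (X : 'M[C]_n) : skew_herm X -> (tr1 X)^* = - tr1 X.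
Proof. by move=> h; rewrite /tr1 fmorph_div /= conjC_nat trace_skew // mulNr. Qed.

Lemma tr1_lin n (a b : C) (X Y : 'M[C]_n) :
  tr1 (a *: X + b *: Y) = a * tr1 X + b * tr1 Y.
Proof. by rewrite /tr1 mxtraceD !mxtraceZ mulrDl !mulrA. Qed.

Lemma tr_comm n (X Y : 'M[C]_n) : \tr (mxcomm X Y) = 0.
Proof. by rewrite /mxcomm raddfB /= mxtrace_mulC subrr. Qed.

Lemma tr1_comm n (X Y : 'M[C]_n) : tr1 (mxcomm X Y) = 0.
Proof. by rewrite /tr1 tr_comm mul0r. Qed.

Lemma tr_shift n (X : 'M[C]_n) : (0 < n)%N -> \tr (X - (tr1 X)%:M) = 0.
Proof.
move=> hn; rewrite raddfB /= mxtrace_scalar /tr1 -[(_ / _) *+ _]mulr_natr divfK ?subrr //.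
by rewrite pnatr_eq0 -lt0n.
Qed.

Lemma tr1_add n (Y : 'M[C]_n) b : (0 < n)%N -> \tr Y = 0 -> tr1 (Y + b%:M) = b.
Proof.
move=> hn hY; rewrite /tr1 mxtraceD hY add0r mxtrace_scalar -[(_ *+ _)]mulr_natr mulfK //.
by rewrite pnatr_eq0 -lt0n.
Qed.

Lemma skew_sub n (X : 'M[C]_n) b : skew_herm X -> b^* = - b -> skew_herm (X - b%:M).
Proof.
move=> /skew_hermP hX hb; apply/skew_hermP => i j; rewrite !mxE rmorphB rmorphMn /= hX hb eq_sym.
by rewrite mulNrn opprB opprK addrC.
Qed.

Lemma skew_add n (X : 'M[C]_n) b : skew_herm X -> b^* = - b -> skew_herm (X + b%:M).
Proof.
move=> /skew_hermP hX hb; apply/skew_hermP => i j; rewrite !mxE rmorphD rmorphMn /= hX hb eq_sym.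
by rewrite mulNrn opprD.
Qed.

Lemma comm_shift n (X Y : 'M[C]_n) a b : mxcomm (X - a%:M) (Y - b%:M) = mxcomm X Y.
Proof.
rewrite /mxcomm !mulmxBl !mulmxBr !mul_mx_scalar !mul_scalar_mx !scale_scalar_mx mulrC.
apply/matrixP => i j; rewrite !mxE; ring.
Qed.


Section Iso2.
Variables (k d r : nat).
Hypothesis hd : (0 < d)%N.
Hypothesis hrk : (r < k)%N.

Local Notation UUt := (({ffun 'I_(k - r) -> 'M[C]_d} * {ffun 'I_r -> 'M[C]_d.+1})%type).
Local Notation SUt := (({ffun 'I_(k - r) -> 'M[C]_d} * {ffun 'I_r -> 'M[C]_d.+1}
   * {ffun 'I_k -> 'M[C]_1})%type).

Definition gt (x : UUt) (j : nat) : C :=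
  match @insub _ _ 'I_(k - r) j with
  | Some i => tr1 (x.1 i)
  | None => match @insub _ _ 'I_r (j - (k - r))%N with
            | Some i => tr1 (x.2 i)
            | None => 0 end end.

Definition phi (x : UUt) : SUt :=
  ([ffun i => x.1 i - (tr1 (x.1 i))%:M], [ffun i => x.2 i - (tr1 (x.2 i))%:M],
   [ffun j : 'I_k => (gt x j)%:M]).

Definition idx1 (i : 'I_(k - r)) : 'I_k := widen_ord (leq_subr r k) i.

Lemma idx2_lt (i : 'I_r) : (k - r + i < k)%N.
Proof. have := ltn_ord i; lia. Qed.

Definition idx2 (i : 'I_r) : 'I_k := Ordinal (idx2_lt i).

Lemma gt1 x (i : 'I_(k - r)) : gt x (idx1 i) = tr1 (x.1 i).
Proof. by rewrite /gt /= valK. Qed.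

Lemma gt2 x (i : 'I_r) : gt x (idx2 i) = tr1 (x.2 i).
Proof.
rewrite /gt /= (@insubN _ (fun x => (x < k - r)%N) 'I_(k - r)) ?addKn ?valK //.
by rewrite -leqNgt leq_addr.
Qed.

Lemma gt_skew x j : UU_pred x -> (gt x j)^* = - gt x j.
Proof.
case/andP => /forallP h1 /forallP h2; rewrite /gt.
case: (@insub _ _ 'I_(k - r) j) => [i|]; first exact: tr1_skew.
case: (@insub _ _ 'I_r _) => [i|]; first exact: tr1_skew.
by rewrite conjC0 oppr0.
Qed.

Lemma phi_P x : UU_pred x -> SU_pred (phi x).
Proof.
move=> hx; have := hx; case/andP => /forallP h1 /forallP h2.
apply/and3P; split; apply/forallP => i; rewrite ffunE.
- by rewrite /skew_herm0 skew_sub ?tr1_skew ?tr_shift ?eqxx ?h1.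
- by rewrite /skew_herm0 skew_sub ?tr1_skew ?tr_shift ?eqxx ?h2.
- by rewrite -[_%:M]add0r skew_add ?gt_skew //; apply/skew_hermP => ? ?; rewrite !mxE conjC0 oppr0.
Qed.

Lemma phi_lin (a b : C) x y : phi (a *: x + b *: y) = a *: phi x + b *: phi y.
Proof.
rewrite /phi; congr (_, _, _); apply/ffunP => i; rewrite !ffunE.
- by rewrite tr1_lin; apply/matrixP => s t; rewrite !mxE; ring.
- by rewrite tr1_lin; apply/matrixP => s t; rewrite !mxE; ring.
have -> : gt (a *: x + b *: y) i = a * gt x i + b * gt y i.
  rewrite /gt; case: (@insub _ _ 'I_(k - r) i) => [i'|]; first by rewrite !ffunE tr1_lin.
  case: (@insub _ _ 'I_r _) => [i'|]; first by rewrite !ffunE tr1_lin.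
  by rewrite !mulr0 addr0.
by apply/matrixP => s t; rewrite !mxE; ring.
Qed.

Lemma phi_br x y : phi (UU_br x y) = SU_br (phi x) (phi y).
Proof.
rewrite /phi /SU_br; congr (_, _, _); apply/ffunP => i; rewrite !ffunE.
- by rewrite comm_shift tr1_comm raddf0 subr0.
- by rewrite comm_shift tr1_comm raddf0 subr0.
have -> : gt (UU_br x y) i = 0.
  rewrite /gt; case: (@insub _ _ 'I_(k - r) i) => [i'|]; first by rewrite !ffunE tr1_comm.
  by case: (@insub _ _ 'I_r _) => [i'|] //; rewrite !ffunE tr1_comm.
by rewrite /mxcomm -!scalar_mxM mulrC subrr raddf0.
Qed.


Lemma iso2 : real_lie_iso (@UU_br C (k - r) r d d.+1) (@SU_br C (k - r) r k d d.+1)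
  (@UU_pred C (k - r) r d d.+1) (@SU_pred C (k - r) r k d d.+1) phi.
Proof.
split; first by move=> x; exact: phi_P.
split.
  move=> x y _ _ E.
  have E1 i : x.1 i = y.1 i.
    have e3 := congr1 (fun z : SUt => z.2 (idx1 i) 0 0) E; move: e3 => /=.
    rewrite !ffunE !mxE !gt1 eqxx !mulr1n => e3.
    have e1 := congr1 (fun z : SUt => z.1.1 i) E; move: e1 => /=.
    by rewrite !ffunE e3 => /(congr1 (fun z => z + (tr1 (y.1 i))%:M)); rewrite !subrK.
  have E2 i : x.2 i = y.2 i.
    have e3 := congr1 (fun z : SUt => z.2 (idx2 i) 0 0) E; move: e3 => /=.
    rewrite !ffunE !mxE !gt2 eqxx !mulr1n => e3.
    have e1 := congr1 (fun z : SUt => z.1.2 i) E; move: e1 => /=.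
    by rewrite !ffunE e3 => /(congr1 (fun z => z + (tr1 (y.2 i))%:M)); rewrite !subrK.
  by move: E1 E2 {E}; case: x => [x1 x2]; case: y => [y1 y2] /= E1 E2; congr pair; apply/ffunP.
split.
  case=> [[y1 y2] y3] /and3P [/forallP h1 /forallP h2 /forallP h3].
  have h3' j : ((y3 j 0 0)^* = - y3 j 0 0) by move: (h3 j) => /skew_hermP.
  exists ([ffun i => y1 i + (y3 (idx1 i) 0 0)%:M], [ffun i => y2 i + (y3 (idx2 i) 0 0)%:M]).
    apply/andP; split; apply/forallP => i; rewrite ffunE skew_add //.
      by case/andP: (h1 i).
    by case/andP: (h2 i).
  rewrite /phi /=; congr (_, _, _); apply/ffunP => i; rewrite !ffunE.
  - by case/andP: (h1 i) => _ /eqP t0; rewrite tr1_add // addrK.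
  - by case/andP: (h2 i) => _ /eqP t0; rewrite tr1_add // addrK.
  case: (ltnP i (k - r)) => hi.
    have ej : i = idx1 (Ordinal hi) by apply: val_inj.
    rewrite {1}ej gt1 /= ffunE tr1_add //; last by case/andP: (h1 (Ordinal hi)) => _ /eqP.
    by rewrite -ej -mx11_scalar.
  have hi' : (i - (k - r) < r)%N by have := ltn_ord i; lia.
  have ej : i = idx2 (Ordinal hi') by apply: val_inj; rewrite /= subnKC.
  rewrite {1}ej gt2 /= ffunE tr1_add //; last by case/andP: (h2 (Ordinal hi')) => _ /eqP.
  by rewrite -ej -mx11_scalar.
split; first by move=> a b x y _ _ _ _; exact: phi_lin.
by move=> x y _ _; exact: phi_br.
Qed.

End Iso2.


Section Dim.
Variables (N k d r : nat).
Hypothesis hk : (0 < k)%N.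
Hypothesis hrk : (r < k)%N.
Hypothesis hN : N = (k * d + r)%N.

Definition Sset : {set 'I_N * 'I_N} := [set p : 'I_N * 'I_N | (p.1 %% k == p.2 %% k)%N].

Definition szf (c : nat) : nat := if (c < r)%N then d.+1 else d.

Lemma szf_prop c u : (c < k)%N -> (c + k * u < N)%N = (u < szf c)%N.
Proof.
move=> hc; rewrite /szf hN; case: ifP => h; first by rewrite arithA // ltnW.
by rewrite arithB // leqNgt h.
Qed.

Lemma count_class c : (c < k)%N -> (\sum_(l < N) ((l %% k == c)%N : nat))%N = szf c.
Proof. by move=> hc; apply: sum_class_nat_test => // u; exact: szf_prop. Qed.

Lemma card_S : #|Sset| = (k * d ^ 2 + 2 * r * d + r)%N.
Proof.
rewrite -sum1_card big_mkcond /=.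
rewrite (eq_bigr (fun p : 'I_N * 'I_N => ((p.1 %% k == p.2 %% k)%N : nat))); last first.
  by move=> p _; rewrite inE; case: ifP.
rewrite -(pair_bigA _ (fun i j : 'I_N => ((i %% k == j %% k)%N : nat))) /=.
rewrite (eq_bigr (fun i : 'I_N => szf (i %% k))); last first.
  move=> i _; rewrite -count_class ?ltn_mod //; apply: eq_bigr => j _; by rewrite eq_sym.
transitivity (\sum_(i < N) \sum_(c < k) ((i %% k == c)%N : nat) * szf c)%N.
  apply: eq_bigr => i _.
  rewrite (bigD1 (Ordinal (ltn_pmod i hk))) //= eqxx mul1n big1 ?addn0 // => c hc.
  suff -> : (i %% k == c)%N = false by [].
  apply/negbTE; apply: contra hc => /eqP E; apply/eqP/val_inj; by rewrite /= E.
rewrite exchange_big /=.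
rewrite (eq_bigr (fun c : 'I_k => szf c * szf c)%N); last first.
  by move=> c _; rewrite -big_distrl /= count_class // mulnC.
rewrite -(big_mkord xpredT (fun c => szf c * szf c)%N) (big_cat_nat _ (n := r)) //=; last exact: ltnW.
rewrite (eq_big_nat _ _ (F2 := fun _ => (d.+1 * d.+1)%N)); last first.
  by move=> i /andP [_ hi]; rewrite /szf hi.
rewrite (eq_big_nat _ _ (F1 := fun c => (szf c * szf c)%N) (F2 := fun _ => (d * d)%N)); last first.
  by move=> i /andP [hi _]; rewrite /szf ltnNge hi.
rewrite !sum_nat_const_nat subn0.
have := ltnW hrk; nia.
Qed.


Definition bc1 (i j : 'I_N) : C := if i == j then 'i else if (i < j)%N then 1 else 'i.
Definition bc2 (i j : 'I_N) : C := if (j < i)%N then 'i else -1.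

Definition Bm (p : 'I_N * 'I_N) : 'M[C]_N :=
  \matrix_(x, y) ((if (x, y) == p then bc1 p.1 p.2 else 0) +
                 (if ((y, x) == p) && (p.1 != p.2) then bc2 p.1 p.2 else 0)).

Lemma Bm_P p : p \in Sset -> Dset k (Bm p).
Proof.
case: p => i j; rewrite inE /= => hij; apply/DsetP; split; last first.
  move=> x y hxy; rewrite mxE !xpair_eqE.
  case: (boolP ((x == i) && (y == j))) => [/andP [/eqP ex /eqP ey]|_].
    by move: hxy; rewrite ex ey hij.
  case: (boolP ((y == i) && (x == j))) => [/andP [/eqP ey /eqP ex]|_] /=.
    by move: hxy; rewrite ex ey eq_sym hij.
  by rewrite addr0.
apply/skew_hermP => x y; rewrite !mxE !xpair_eqE /=.
case: (eqVneq i j) => [<-|nij] /=.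
  rewrite !andbF !addr0 [(y == i) && _]andbC; case: ifP => _.
    by rewrite /bc1 eqxx conjCi.
  by rewrite conjC0 oppr0.
rewrite !andbT.
case: (boolP ((x == i) && (y == j))) => [/andP [/eqP ex /eqP ey]|h1].
  have -> : ((y == i) && (x == j)) = false.
    by apply/negP => /andP [/eqP ey' _]; move: nij; rewrite -ey' ey eqxx.
  rewrite /= add0r addr0 /bc1 /bc2 (negbTE nij).
  case: ltngtP => h; try by rewrite ?conjCi ?rmorphN ?rmorph1 ?opprK.
  by move: nij; rewrite (val_inj h) eqxx.
case: (boolP ((y == i) && (x == j))) => [_|h2]; last by rewrite addr0 conjC0 oppr0.
rewrite addr0 add0r /bc1 /bc2 (negbTE nij).
case: ltngtP => h; try by rewrite ?conjCi ?rmorphN ?rmorph1 ?opprK.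
by move: nij; rewrite (val_inj h) eqxx.
Qed.

Lemma sum_pick (T : finType) (S : pred T) (a : T) (F : T -> C) :
  \sum_(p in S) (if a == p then F p else 0) = if a \in S then F a else 0.
Proof.
rewrite -big_mkcondr; case: ifP => ha.
  by apply: big_pred1 => p /=; case: (eqVneq p a) => [->|hpa]; rewrite ?ha ?andbF.
by rewrite big_pred0 // => p; case: (eqVneq p a) => [->|hpa]; rewrite ?ha ?andbF.
Qed.

Lemma Bm_sum (c : 'I_N * 'I_N -> C) (x y : 'I_N) :
  (\sum_(p in Sset) c p *: Bm p) x y =
  (if (x, y) \in Sset then c (x, y) * bc1 x y else 0) +
  (if (y, x) \in Sset then (if y != x then c (y, x) * bc2 y x else 0) else 0).
Proof.
rewrite summxE.
rewrite (eq_bigr (fun p => (if (x, y) == p then c p * bc1 p.1 p.2 else 0) +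
   (if (y, x) == p then (if p.1 != p.2 then c p * bc2 p.1 p.2 else 0) else 0))); last first.
  move=> p _; rewrite !mxE mulrDr; congr (_ + _); first by case: ifP; rewrite ?mulr0.
  by case: ((y, x) == p); case: (p.1 != p.2); rewrite ?mulr0.
rewrite big_split /= !sum_pick //.
Qed.


Lemma Sset_sym (i j : 'I_N) : ((j, i) \in Sset) = ((i, j) \in Sset).
Proof. by rewrite !inE eq_sym. Qed.

Lemma indepS (c : 'I_N * 'I_N -> C) : (forall p, p \in Sset -> c p \is Num.real) ->
  \sum_(p in Sset) c p *: Bm p = 0 -> forall p, p \in Sset -> c p = 0.
Proof.
move=> hc H [i j] hp.
have E x y : (\sum_(p in Sset) c p *: Bm p) x y = 0 by rewrite H mxE.
have hsym : (j, i) \in Sset by rewrite Sset_sym.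
case: (ltngtP i j) => h.
- have nij : (i == j) = false by apply: ltn_eqF.
  have nji : (j == i) = false by apply: gtn_eqF.
  have := E i j; rewrite Bm_sum hp hsym /bc1 /bc2 h nij nji /= mulr1.
  move=> e; rewrite -(Re_rect (hc _ hp) (hc _ hsym)) mulrC e raddf0 //.
- have nij : (i == j) = false by apply: gtn_eqF.
  have nji : (j == i) = false by apply: ltn_eqF.
  have := E j i; rewrite Bm_sum hp hsym /bc1 /bc2 h nij nji /= mulr1.
  move=> e; rewrite -(Im_rect (hc _ hsym) (hc _ hp)) mulrC e raddf0 //.
- have eij : i = j by apply: val_inj.
  move: hp; rewrite -eij => hp.
  have := E i i; rewrite Bm_sum hp /bc1 !eqxx /= addr0 => /eqP.
  by rewrite mulf_eq0 (negbTE (neq0Ci C)) orbF => /eqP.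
Qed.

Lemma spanS (A : 'M[C]_N) : Dset k A ->
  exists2 c : 'I_N * 'I_N -> C, (forall p, c p \is Num.real) &
     A = \sum_(p in Sset) c p *: Bm p.
Proof.
move=> /DsetP [/skew_hermP hA zA].
exists (fun p => if p.1 == p.2 then 'Im (A p.1 p.1) else if (p.1 < p.2)%N then 'Re (A p.1 p.2)
                 else 'Im (A p.2 p.1)).
  by move=> p; case: ifP => _; [|case: ifP => _]; rewrite ?Creal_Re ?Creal_Im.
apply/matrixP => x y; rewrite Bm_sum (Sset_sym x y) /=.
case: (boolP ((x, y) \in Sset)) => hxy; last first.
  by rewrite /= addr0 zA //; move: hxy; rewrite inE.
case: (ltngtP x y) => h.
- have nij : (x == y) = false by apply: ltn_eqF.
  have nji : (y == x) = false by apply: gtn_eqF.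
  rewrite /bc1 /bc2 h nij nji /= mulr1.
  by rewrite [LHS]Crect mulrC.
- have nij : (x == y) = false by apply: gtn_eqF.
  have nji : (y == x) = false by apply: ltn_eqF.
  have nxy : (x < y)%N = false by rewrite ltnNge (ltnW h).
  rewrite /bc1 /bc2 nij nji nxy /=.
  rewrite -[A x y]opprK -hA [in LHS](Crect (A y x)) rmorphD rmorphM /= conjCi.
  rewrite !conj_Creal ?Creal_Re ?Creal_Im //; ring.
- have exy : x = y by apply: val_inj.
  rewrite -exy /bc1 !eqxx /= addr0.
  have hre : 'Re (A x x) = 0 by rewrite ReE hA subrr mul0r.
  by rewrite [LHS]Crect hre add0r mulrC.
Qed.

Lemma realdimS : real_dim [pred A : 'M[C]_N | Dset k A] #|Sset|.
Proof.
exists (fun i => Bm (enum_val i)); split; first by move=> i; rewrite inE; apply: Bm_P; exact: enum_valP.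
split.
  move=> c hc hsum i.
  have x0 := enum_valP i.
  have := @indepS (fun p => c (enum_rank_in x0 p)).
  have hK j : enum_rank_in x0 (enum_val j) = j by rewrite enum_valK_in.
  move=> /(_ _ _ (enum_val i) x0); rewrite hK; apply.
    by move=> p _; apply: hc.
  by rewrite big_enum_val /=; rewrite -[RHS]hsum; apply: eq_bigr => j _; rewrite hK.
move=> A; rewrite inE => /spanS [c hc ->].
exists (fun i => c (enum_val i)) => //.
by rewrite big_enum_val.
Qed.

End Dim.

End Aux.

Unset Implicit Arguments.

Theorem mainTheorem3 (C : numClosedFieldType) (N k : nat)
  (hN : (1 <= N)%N) (hk0 : (0 < k)%N) (hkN : (k <= N)%N) :
  let d := (N %/ k)%N in
  let r := (N - k * d)%N in
  let P : pred 'M[C]_N := [pred A | Dset k A] in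
  real_lie_subalg_u P /\
  real_lie_isomorphic (@mxcomm C N) (@UU_br C (k - r) r d d.+1)
     P (@UU_pred C (k - r) r d d.+1) /\
  real_lie_isomorphic (@UU_br C (k - r) r d d.+1) (@SU_br C (k - r) r k d d.+1)
     (@UU_pred C (k - r) r d d.+1) (@SU_pred C (k - r) r k d d.+1) /\
  real_dim P (k * d ^ 2 + 2 * r * d + r)%N /\
  (k * d ^ 2 + 2 * r * d + r = d * (N + r) + r)%N.
Proof.
move=> d r P.
have hd : (0 < d)%N by rewrite divn_gt0.
have Er : r = (N %% k)%N by rewrite /r /d [in X in (X - _)%N](divn_eq N k) mulnC addKn.
have hrk : (r < k)%N by rewrite Er ltn_mod.
have hNe : N = (k * d + r)%N by rewrite Er /d mulnC -divn_eq.
split; first exact: subalgP.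
split; first by exists (@fwd C N k d r); apply: iso1.
split; first by exists (@phi C k d r); apply: iso2.
split; first by rewrite -(@card_S N k d r hk0 hrk hNe); exact: realdimS.
rewrite [in RHS]hNe; clear; nia.
Qed.
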